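(* Let $\mu\in\mathcal P_\varnothing(nl)$ have Frobenius form $(a_1,\dots,a_k\mid b_1,\dots,b_k)$. Then \[\mathrm{Eig}(\mu)=\sum_{i=1}^k\left(t^{e'_{b_i}}\sum_{j=1}^{\lceil b_i/l\rceil}t^{-(j-1)h}+t^{e''_{a_i}}\sum_{j=1}^{\lfloor(a_i+1)/l\rfloor}t^{(j-1)h}\right),\] where the subscripts of $e',e''$ are read modulo $l$.
   Context: Let $\mathbf h=(h,H_1,\dots,H_{l-1})\in\mathbb{Q}^l$ be a (generic) parameter and $H_0=-(H_1+\dots+H_{l-1})$. Let $\theta=(\theta_0,\dots,\theta_{l-1})=(-h+H_0,H_1,\dots,H_{l-1})$, with indices mod $l$; note $\sum_i\theta_i=-h$. Define $e'_0=-h$ and $e'_i=H_1+\dots+H_i$ for $1\le i\le l-1$. Define $e''_{l-1}=0$ and $e''_i=h+\sum_{j=1}^{l-i-1}H_j$ for $0\le i\le l-2$. $\mathcal P_\varnothing(nl)$ is the set of partitions of $nl$ with empty $l$-core. The Frobenius form has $a_i=\mu_i-i$ and $b_i=\mu^t_i-i$ for the diagonal cells $(i,i)$. For $m\ge1$ and $1\le r\le m$, let $A(m,r)$ be the $m\times m$ matrix with only nonzero entries $A(m,r)_{j+1,j}=\sum_{s=1}^j\theta_{r-s}$ for $1\le j<r$ and $A(m,r)_{j+1,j}=-\sum_{s=0}^{m-j-1}\theta_{-m+r+s}$ for $r\le j\le m-1$. Let $\Lambda(m)$ be the matrix with ones at $(j,j+1)$. Then $\Lambda(m)A(m,r)=\mathrm{diag}(\alpha_1,\dots,\alpha_m)$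 with $\alpha_j=A(m,r)_{j+1,j}$ for $j<m$ and $\alpha_m=0$. For $\mu$ with $r_i=b_i+1$ and $m_i=a_i+b_i+1$, let $\alpha^{(i)}_j$ be these diagonal entries for $(m,r)=(m_i,r_i)$. Define the formal sum $\mathrm{Eig}(\mu,i)=\sum_{1\le j\le m_i,\ j\equiv r_i-1\ (\mathrm{mod}\ l)}t^{\alpha^{(i)}_j}$ and $\mathrm{Eig}(\mu)=\sum_{i=1}^k\mathrm{Eig}(\mu,i)$, a sum of monomials with rational exponents. *)

(* Defs.v *)
From mathcomp Require Import all_boot all_order all_algebra.
Set Implicit Arguments. Unset Strict Implicit. Unset Printing Implicit Defensive.
Import Order.TTheory GRing.Theory Num.Theory.

(* A partition is a nonincreasing list of positive parts; rows are 0-indexed: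
   [part mu i] is the paper's mu_{i+1}. *)
Definition is_partition (mu : seq nat) : bool :=
  sorted geq mu && all (fun x => 0 < x) mu.

Definition part (mu : seq nat) (i : nat) : nat := nth 0 mu i.

(* [border_strip l nu mu]: nu is contained in mu and the skew diagram mu/nu is
   an l-rim hook (border strip): its l cells occupy the consecutive rows
   p..q (0-indexed), and consecutive rows overlap in exactly one column
   (connected, no 2x2 square), i.e. mu_{i+1} = nu_i + 1 for p <= i < q. *)
Definition border_strip (l : nat) (nu mu : seq nat) : Prop :=
  exists p q : nat, [/\ p <= q,
    (forall i, i < p \/ q < i -> part nu i = part mu i),
    (forall i, p <= i <= q -> part nu i < part mu i),
    (forall i, p <= i < q -> part mu i.+1 = (part nu i).+1) &
    sumn mu = sumn nu + l].

(* Partitions with empty l-core: those reducible to the empty partition by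
   successively removing l-rim hooks (equivalently, built from the empty
   partition by successively adding l-rim hooks). *)
Inductive empty_core (l : nat) : seq nat -> Prop :=
| empty_core_nil : empty_core l [::]
| empty_core_add : forall nu mu : seq nat,
    empty_core l nu -> is_partition nu -> is_partition mu ->
    border_strip l nu mu -> empty_core l mu.

Definition conj_part (mu : seq nat) (i : nat) : nat := count (fun x => i <= x) mu.

Definition durfee (mu : seq nat) : nat :=
  count (fun d => d < part mu d) (iota 0 (size mu)).

(* For the 0-indexed diagonal cell d (the paper's i = d+1):
   a_i = mu_i - i,  b_i = mu^t_i - i. *)
Definition frob_a (mu : seq nat) (d : nat) : nat := part mu d - d.+1.
Definition frob_b (mu : seq nat) (d : nat) : nat := conj_part mu d.+1 - d.+1.

Local Open Scope ring_scope.

(* h : rat and H : nat -> rat, of which only H 1, ..., H (l-1) are used. *)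
Definition H0 (l : nat) (H : nat -> rat) : rat := - \sum_(1 <= i < l) H i.

Definition theta (l : nat) (h : rat) (H : nat -> rat) (s : int) : rat :=
  let i := (s %% (l%:Z))%Z in
  if i == 0 then - h + H0 l H else H (absz i).

Definition e' (l : nat) (h : rat) (H : nat -> rat) (i : nat) : rat :=
  if i == 0%N then - h else \sum_(1 <= j < i.+1) H j.

Definition e'' (l : nat) (h : rat) (H : nat -> rat) (i : nat) : rat :=
  if i == l.-1 then 0 else h + \sum_(1 <= j < (l - i - 1).+1) H j.

(* alpha_j for (m, r): the subdiagonal entry A(m,r)_{j+1,j} for j < m,
   and alpha_m = 0 (diagonal entries of Lambda(m) A(m,r)). *)
Definition alpha (l : nat) (h : rat) (H : nat -> rat) (m r j : nat) : rat :=
  if j == m then 0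
  else if (j < r)%N then \sum_(1 <= s < j.+1) theta l h H (r%:Z - s%:Z)
  else - \sum_(0 <= s < m - j) theta l h H (- m%:Z + r%:Z + s%:Z).

(* Formal sums of monomials t^q (q : rat) are represented as multisets of
   exponents, i.e. sequences of rationals compared up to permutation. *)
Definition Eig_i (l : nat) (h : rat) (H : nat -> rat) (mu : seq nat) (d : nat)
  : seq rat :=
  let a := frob_a mu d in let b := frob_b mu d in
  let m := (a + b + 1)%N in let r := b.+1 in
  [seq alpha l h H m r j | j <- iota 1 m & ((j %% l)%N == (r.-1 %% l)%N)].

Definition Eig (l : nat) (h : rat) (H : nat -> rat) (mu : seq nat) : seq rat :=
  flatten [seq Eig_i l h H mu d | d <- iota 0 (durfee mu)].

Definition Eig_rhs_i (l : nat) (h : rat) (H : nat -> rat) (mu : seq nat) (d : nat)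
  : seq rat :=
  let a := frob_a mu d in let b := frob_b mu d in
  [seq e' l h H (b %% l)%N - (j.-1)%:R * h | j <- iota 1 ((b + l - 1) %/ l)%N] ++
  [seq e'' l h H (a %% l)%N + (j.-1)%:R * h | j <- iota 1 ((a + 1) %/ l)%N].

Definition Eig_rhs (l : nat) (h : rat) (H : nat -> rat) (mu : seq nat) : seq rat :=
  flatten [seq Eig_rhs_i l h H mu d | d <- iota 0 (durfee mu)].

(* Main.v *)
Require Import Defs.
From mathcomp Require Import all_boot all_order all_algebra.
From mathcomp Require Import zify ring.
Import Order.TTheory GRing.Theory Num.Theory.
Local Open Scope ring_scope.

Lemma theta_per (l : nat) h H (x : int) (k : nat) :
  theta l h H (x + (k * l)%N%:Z) = theta l h H x.
Proof. by rewrite /theta PoszM [x + _]addrC modzMDl. Qed.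

Lemma theta_nat (l : nat) h H (s : nat) :
  (0 < s < l)%N -> theta l h H s%:Z = H s.
Proof.
move=> /andP[s0 sl]; rewrite /theta modz_nat modn_small //.
by rewrite eqz_nat; case: s s0 {sl}.
Qed.

Lemma theta_0 (l : nat) h H : theta l h H 0 = - h + H0 l H.
Proof. by rewrite /theta mod0z eqxx. Qed.

Definition T l h H (x : int) (n : nat) : rat :=
  \sum_(0 <= s < n) theta l h H (x + s%:Z).

Lemma T0 l h H x : T l h H x 0 = 0.
Proof. by rewrite /T big_geq. Qed.

Lemma T_add l h H x n1 n2 :
  T l h H x (n1 + n2) = T l h H x n1 + T l h H (x + n1%:Z) n2.
Proof.
elim: n2 => [|n IH]; first by rewrite addn0 T0 addr0.
rewrite addnS /T !big_nat_recr //= -/(T _ _ _ _ _) IH /T addrA.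
by rewrite PoszD addrA.
Qed.

Lemma T_shift l h H x k n :
  T l h H (x + (k * l)%N%:Z) n = T l h H x n.
Proof.
rewrite /T; apply: eq_bigr => s _; by rewrite addrAC theta_per.
Qed.

Lemma T_step l h H x : T l h H (x + 1) l = T l h H x l.
Proof.
have := T_add l h H x l 1; have := T_add l h H x 1 l.
rewrite addnC => ->.
have -> : T l h H (x + l%:Z) 1 = T l h H x 1.
  by have := T_shift l h H x 1 1; rewrite mul1n.
by move=> E; apply: (addrI (T l h H x 1)); rewrite E addrC.
Qed.

Lemma T_zero l h H : (0 < l)%N -> T l h H 0 l = - h.
Proof.
move=> l0; rewrite /T.
case: l l0 => // l _; rewrite big_nat_recl // add0r theta_0.
rewrite /H0 big_add1 /=.
rewrite [X in _ + X](eq_big_nat _ _ (F2 := fun i => H i.+1)); first by rewrite subrK.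
by move=> i /andP[_ il]; rewrite add0r theta_nat.
Qed.

Lemma T_any l h H x : (0 < l)%N -> T l h H x l = - h.
Proof.
move=> l0; rewrite -(T_zero l h H l0).
case: x => n; elim: n => [|n IH] //.
- by rewrite -[Posz n.+1]add0r -addn1 PoszD addrA T_step.
- by rewrite -(T_step l h H (Negz 0)).
- have E : Negz n.+1 + 1 = Negz n by rewrite !NegzE; lia.
  by rewrite -IH -E T_step.
Qed.

Lemma T_mul l h H x t : (0 < l)%N -> T l h H x (t * l) = - (t%:R * h).
Proof.
move=> l0; elim: t x => [|t IH] x; first by rewrite mul0n T0 mul0r oppr0.
by rewrite mulSn T_add T_any // IH -addn1 natrD; ring.
Qed.

Lemma sum_T l h H (r : int) j :
  \sum_(1 <= s < j.+1) theta l h H (r - s%:Z) = T l h H (r - j%:Z) j.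
Proof.
elim: j r => [|j IH] r; first by rewrite big_geq // T0.
rewrite big_nat_recr //= IH -add1n T_add addrC; congr (_ + _).
  by rewrite /T big_nat1 addr0.
by congr (T _ _ _ _ _); rewrite PoszD; ring.
Qed.

Lemma alpha_lo l h H m r j : (j < r)%N -> (r <= m)%N ->
  alpha l h H m r j = T l h H (r%:Z - j%:Z) j.
Proof.
move=> jr rm; rewrite /alpha jr ifF ?sum_T //.
apply/negbTE; rewrite neq_ltn; apply/orP; left; exact: leq_trans jr rm.
Qed.

Lemma alpha_hi l h H m r j : (r <= j)%N -> (j <= m)%N ->
  alpha l h H m r j = - T l h H (- m%:Z + r%:Z) (m - j).
Proof.
move=> rj jm; rewrite /alpha ltnNge rj /=.
case: eqP => [->|_]; last by [].
by rewrite subnn T0 oppr0.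
Qed.

Definition j0 l b := if (b %% l == 0)%N then l else (b %% l)%N.

Lemma decomp_b l b : (0 < l)%N ->
  let c := ((b + l - 1) %/ l)%N in
  [/\ (0 < j0 l b <= l)%N, (c = 0)%N -> b = 0%N & (0 < c)%N -> b = (j0 l b + c.-1 * l)%N].
Proof.
move=> l0 c; rewrite /c /j0 {c}.
have bE := divn_eq b l; set q := (b %/ l)%N in bE *; set rho := (b %% l)%N in bE *.
have rl : (rho < l)%N by rewrite ltn_mod.
clearbody q rho.
case: eqP => [r0|rn0].
- have -> : (b + l - 1 = q * l + (l - 1))%N by lia.
  rewrite divnMDl // (divn_small (m := (l-1)%N)); last by lia.
  rewrite addn0 l0 leqnn; split => //; nia.
- have -> : (b + l - 1 = q.+1 * l + (rho - 1))%N by rewrite mulSn; lia.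
  rewrite divnMDl // (divn_small (m := (rho-1)%N)); last by lia.
  rewrite addn0; split => //; nia.
Qed.

Lemma idx_lo l b : (0 < l)%N ->
  perm_eq [seq j <- iota 1 b | (j %% l == b %% l)%N]
          [seq (j0 l b + t * l)%N | t <- iota 0 ((b + l - 1) %/ l)].
Proof.
move=> l0; have [j0l c0 cpos] := decomp_b l b l0.
move: j0l cpos c0; set c := ((b + l - 1) %/ l)%N; set j := j0 l b.
clearbody c j => /andP[j0p j0l] cpos c0.
apply: uniq_perm.
- by rewrite filter_uniq // iota_uniq.
- rewrite map_inj_uniq ?iota_uniq // => x y /eqP; rewrite eqn_add2l eqn_pmul2r //; by move/eqP.
move=> x; rewrite mem_filter mem_iota; apply/idP/mapP.
- case/andP => xm /andP[x1 xb].
  have cp : (0 < c)%N by case: (posnP c) => // /c0 b0; move: xb; rewrite b0; lia.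
  have bE := cpos cp.
  move: xm; rewrite eq_sym eqn_mod_dvd; last by lia.
  case/dvdnP => K KE.
  have Kc : (K < c)%N.
    rewrite -(ltn_pmul2r l0) -KE; move: bE; case: c cp {c0 cpos} => // c _ /= ->; rewrite mulSn; lia.
  exists (c.-1 - K)%N; first by rewrite mem_iota; lia.
  rewrite mulnBl; move: Kc; case: c cp {c0 cpos} bE => // c _ /= bE Kc.
  have : (K * l <= c * l)%N by rewrite leq_mul2r; lia.
  lia.
- case=> t; rewrite mem_iota => /andP[_ tc] ->.
  have cp : (0 < c)%N by lia.
  have bE := cpos cp.
  rewrite bE [(j + t * l)%N]addnC [(j + _ * l)%N]addnC !modnMDl eqxx /=.
  have : (t <= c.-1)%N by lia.
  move=> /(leq_mul (leqnn l)); rewrite ![(l * _)%N]mulnC; lia.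
Qed.

Lemma idx_hi l a b : (0 < l)%N ->
  perm_eq [seq j <- iota (1 + b) (a + 1) | (j %% l == b %% l)%N]
          [seq (b + (((a + 1) %/ l) - t) * l)%N | t <- iota 0 ((a + 1) %/ l)].
Proof.
move=> l0.
have aE := divn_eq (a + 1) l; set Q := ((a + 1) %/ l)%N in aE *.
set sg := ((a + 1) %% l)%N in aE *.
have sl : (sg < l)%N by rewrite ltn_mod.
clearbody Q sg.
apply: uniq_perm.
- by rewrite filter_uniq // iota_uniq.
- rewrite map_inj_in_uniq ?iota_uniq // => x y; rewrite !mem_iota => /andP[_ xQ] /andP[_ yQ].
  move/eqP; rewrite eqn_add2l eqn_pmul2r // => /eqP; lia.
move=> x; rewrite mem_filter mem_iota; apply/idP/mapP.
- case/andP => xm /andP[x1 xb].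
  move: xm; rewrite eqn_mod_dvd; last by lia.
  case/dvdnP => K KE.
  have K1 : (0 < K)%N by case: K KE => //= KE; lia.
  have KQ : (K <= Q)%N.
    rewrite -ltnS -(ltn_pmul2r l0) mulSn; lia.
  exists (Q - K)%N; first by rewrite mem_iota; lia.
  have -> : (Q - (Q - K) = K)%N by lia.
  lia.
- case=> t; rewrite mem_iota => /andP[_ tQ] ->.
  rewrite [(b + _)%N]addnC modnMDl eqxx /=.
  have : ((Q - t) * l <= Q * l)%N by rewrite leq_mul2r leq_subr orbT.
  have : (1 * l <= (Q - t) * l)%N by rewrite leq_mul2r; apply/orP; right; lia.
  lia.
Qed.

Lemma T_e' l h H b : (0 < l)%N -> T l h H 1 (j0 l b) = e' l h H (b %% l).
Proof.
move=> l0; rewrite /j0 /e'; case: eqP => [_|r0]; first by rewrite T_any.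
rewrite /T big_add1 /=; apply: eq_big_nat => i /andP[_ il].
rewrite (_ : 1 + i%:Z = i.+1%:Z); last by rewrite -addn1 PoszD addrC.
rewrite theta_nat //.
apply/andP; split => //; have := ltn_mod b l; rewrite l0; lia.
Qed.

Lemma T_e'' l h H a : (0 < l)%N -> (0 < (a + 1) %/ l)%N ->
  - T l h H (Posz (l + 1 - (a + 1) %% l)) ((a + 1) %% l) = e'' l h H (a %% l).
Proof.
move=> l0 Q0.
have aE := divn_eq (a + 1) l; set Q := ((a + 1) %/ l)%N in aE Q0 *.
set sg := ((a + 1) %% l)%N in aE *.
have sl : (sg < l)%N by rewrite ltn_mod.
clearbody Q sg.
rewrite /e''.
case: (posnP sg) => [s0|sp].
- have -> : (a %% l = l.-1)%N.
    have -> : (a = (Q.-1) * l + l.-1)%N by move: aE; rewrite s0; case: Q Q0 => // Q _ /=; rewrite mulSn; lia.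
    by rewrite modnMDl modn_small //; lia.
  by rewrite eqxx s0 T0 oppr0.
have -> : (a %% l = sg.-1)%N.
  have -> : (a = Q * l + sg.-1)%N by lia.
  by rewrite modnMDl modn_small //; lia.
rewrite ifF; last by apply/eqP; lia.
move: sp sl aE; case: sg => // s _ sl aE /=.
rewrite (_ : s.+1 = (s + 1)%N) 1?addn1 //.
rewrite T_add [T _ _ _ _ 1]/T big_nat1 addr0.
have -> : (l.+1 - (s + 1) = l - s)%N by lia.
have -> : (Posz (l - s) + Posz s) = l%:Z by lia.
have -> : theta l h H l%:Z = - h + H0 l H.
  by rewrite -theta_0 -(theta_per l h H 0 1) add0r mul1n.
rewrite /H0 (big_cat_nat (n := (l - s)%N)) /=; [|lia|lia].
have -> : ((l - s - 1).+1 = l - s)%N by lia.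
have -> : \sum_((l - s)%N <= i < l) H i = \sum_(0 <= i < s) H (i + (l - s))%N.
  rewrite -{1}(add0n (l - s)%N) big_addn; congr (\big[_/_]_(0 <= i < _) _); lia.
have -> : T l h H (Posz (l - s)) s = \sum_(0 <= i < s) H (i + (l - s))%N.
  rewrite /T; apply: eq_big_nat => i /andP[_ si].
  have -> : Posz (l - s) + Posz i = Posz (i + (l - s)) by lia.
  rewrite theta_nat //; apply/andP; split; lia.
set A := \sum_(0 <= i < s) _; set B := \sum_(1 <= i < l - s) _.
by ring.
Qed.


Lemma perm_map_in (T U : eqType) (f g : T -> U) s :
  {in s, f =1 g} -> perm_eq (map f s) (map g s).
Proof. by move/eq_in_map => ->. Qed.

Lemma key l h H a b : (0 < l)%N ->
  perm_eq [seq alpha l h H (a + b + 1) b.+1 j | j <- iota 1 (a + b + 1) & ((j %% l)%N == (b.+1.-1 %% l)%N)]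
   ([seq e' l h H (b %% l) - (j.-1)%:R * h | j <- iota 1 ((b + l - 1) %/ l)] ++
    [seq e'' l h H (a %% l) + (j.-1)%:R * h | j <- iota 1 ((a + 1) %/ l)]).
Proof.
move=> l0.
have -> : iota 1 (a + b + 1) = iota 1 b ++ iota (1 + b) (a + 1) by rewrite -iotaD; congr iota; lia.
rewrite filter_cat map_cat /=; apply: perm_cat.
- apply: perm_trans (perm_map _ (idx_lo l b l0)) _.
  rewrite -map_comp (iotaDl 1 0) -map_comp.
  apply: perm_map_in => t; rewrite mem_iota add0n => /andP[_ tc] /=.
  have [/andP[j0p j0l] _ cpos] := decomp_b l b l0.
  have bE := cpos (leq_ltn_trans (leq0n t) tc).
  move: tc bE; set c := ((b + l - 1) %/ l)%N; set j := j0 l b => tc bE.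
  rewrite alpha_lo; [|nia|lia].
  rewrite addnC T_add T_mul // -T_e' //.
  have -> : Posz b.+1 - Posz (t * l + j) + Posz (t * l) = 1 + Posz (c.-1 * l) by lia.
  rewrite T_shift add0n; ring.
- apply: perm_trans (perm_map _ (idx_hi l a b l0)) _.
  rewrite -map_comp (iotaDl 1 0) -map_comp.
  apply: perm_map_in => t; rewrite mem_iota add0n => /andP[_ tQ] /=.
  have aE := divn_eq (a + 1) l.
  have sl : ((a + 1) %% l < l)%N by rewrite ltn_mod.
  have Q0 : (0 < (a + 1) %/ l)%N by lia.
  rewrite -(T_e'' l h H a l0 Q0).
  move: tQ aE sl Q0; set Q := ((a + 1) %/ l)%N; set sg := ((a + 1) %% l)%N => tQ aE sl Q0.
  have QtQ : ((Q - t) * l <= Q * l)%N by rewrite leq_mul2r leq_subr orbT.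
  have Qt1 : (1 * l <= (Q - t) * l)%N by rewrite leq_mul2r; apply/orP; right; lia.
  rewrite alpha_hi; [|lia|lia].
  have -> : (a + b + 1 - (b + (Q - t) * l) = t * l + sg)%N by nia.
  rewrite T_add T_mul //.
  rewrite -(T_shift l h H _ (Q - t + 1)).
  have -> : - Posz (a + b + 1) + Posz b.+1 + Posz (t * l) + Posz ((Q - t + 1) * l) = Posz (l + 1 - sg) by nia.
  rewrite add0n; ring.
Qed.

Theorem lemma6p16 (l n : nat) (h : rat) (H : nat -> rat) (mu : seq nat) :
  (0 < l)%N -> is_partition mu -> sumn mu = (n * l)%N -> empty_core l mu ->
  perm_eq (Eig l h H mu) (Eig_rhs l h H mu).
Proof.
move=> l0 _ _ _; rewrite /Eig /Eig_rhs.
elim: (iota 0 (durfee mu)) => [|d s IH] //=.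
apply: perm_cat => //.
exact: key.
Qed.
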